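(* Let $K$ be a simplicial complex on the vertex set $[m]$ which has a minimal Taylor resolution. Then there exist a finite set $W$ and a sequence $\mathtt{N}$ of subsets of $W$ such that $K\cong K(\mathtt{N})$.
   Context: For a finite set $W$ and a sequence $\mathtt{N}=\{N_1,\ldots,N_r\}$ of subsets of $W$ (repetitions allowed), choose distinct new points $a_1,\ldots,a_r\notin W$, put $\widetilde{N}_i=N_i\sqcup\{a_i\}$ and $V=W\sqcup\{a_1,\ldots,a_r\}$; $K(\mathtt{N})$ is the simplicial complex on vertex set $V$ whose minimal non-faces are exactly $\widetilde{N}_1,\ldots,\widetilde{N}_r$. A minimal non-face of $K$ is a non-empty $N\subset[m]$ with $N\notin K$ and $N-\{i\}\in K$ for all $i\in N$. With $N_1,\ldots,N_r$ the minimal non-faces of $K$, $K$ has a minimal Taylor resolution iff the Taylor resolution of $\Bbbk[K]$ (free on $w_{i_1,\ldots,i_\ell}$, differential $d(w_{i_1,\ldots,i_\ell})=\sum_k(-1)^{k+1}v_{(N_{i_1}\cup\cdots\cup N_{i_\ell})-(N_{i_1}\cup\cdots\widehat{N_{i_k}}\cdots\cup N_{i_\ell})}w_{i_1,\ldots,\widehat{i_k},\ldots,i_\ell}$) satisfies $d\otimes\Bbbk=0$; equivalently $N_i\not\subset\bigcup_{k\ne i}N_k$ for all $i$. Ghost vertices of $K$ are allowed. *)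

(* Defs.v *)
From mathcomp Require Import all_boot.
Set Implicit Arguments. Unset Strict Implicit. Unset Printing Implicit Defensive.

(* A simplicial complex on a finite vertex type V: a family of subsets
   containing the empty set and closed under taking subsets.
   Ghost vertices (v with [set v] \notin K) are allowed. *)
Definition simplicial_complex (V : finType) (K : {set {set V}}) : Prop :=
  set0 \in K /\ forall s t : {set V}, t \subset s -> s \in K -> t \in K.

Definition min_nonface (V : finType) (K : {set {set V}}) (N : {set V}) : bool :=
  [&& N != set0, N \notin K & [forall i in N, (N :\ i) \in K]].

Definition min_nonfaces (V : finType) (K : {set {set V}}) : {set {set V}} :=
  [set N | min_nonface K N].

(* K has a minimal Taylor resolution: d (x) k = 0 for the Taylor resolution.
   Unfolded: every coefficient v_{(N_{i_1} u..u N_{i_l}) - (... hat N_{i_k} ...)}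
   of the differential is a non-constant monomial, i.e. for every family I of
   minimal non-faces and every N in I, N is not contained in the union of the
   other members of I.  (Minimal non-faces are pairwise distinct sets, so
   indexing by sets of minimal non-faces is indexing by subsets of {1..r}.) *)
Definition minimal_Taylor_resolution (V : finType) (K : {set {set V}}) : Prop :=
  forall I : {set {set V}}, I \subset min_nonfaces K ->
    forall N, N \in I -> ~~ (N \subset \bigcup_(M in I :\ N) M).

(* K(N): vertex set V = W + {a_1,...,a_r} (the a_i are inr i), with minimal
   non-faces exactly tN_i = N_i u {a_i}; i.e. the faces are the subsets of V
   containing no tN_i (the tN_i form an antichain since the a_i are distinct). *)
Definition tilde_N (W : finType) (r : nat) (N : 'I_r -> {set W}) (i : 'I_r)
  : {set W + 'I_r} := (inl @: N i) :|: [set inr i].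

Definition K_of (W : finType) (r : nat) (N : 'I_r -> {set W})
  : {set {set W + 'I_r}} :=
  [set s : {set W + 'I_r} | [forall i : 'I_r, ~~ (tilde_N N i \subset s)]].

Definition sc_iso (V1 V2 : finType) (K1 : {set {set V1}}) (K2 : {set {set V2}})
  : Prop :=
  exists f : V1 -> V2, bijective f /\ forall s : {set V1}, (s \in K1) = (f @: s \in K2).

(* Main.v *)
Require Import Defs.
From mathcomp Require Import all_boot.

Lemma faces_char (V : finType) (K : {set {set V}}) :
  simplicial_complex K -> forall s,
  (s \in K) = [forall M in min_nonfaces K, ~~ (M \subset s)].
Proof.
move=> [K0 Kc] s; apply/idP/forall_inP.
  move=> sK M; rewrite inE => /and3P [_ MK _]; apply/negP => Ms.
  by move: MK; rewrite (Kc _ _ Ms sK).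
move=> H; apply/negPn/negP => sK.
have [A Amn As] := @minset_exists _ [pred A | A \notin K] s sK.
have [AK Amin] := minsetP Amn.
suff: A \in min_nonfaces K by move/H; rewrite As.
rewrite inE; apply/and3P; split => //.
  by apply/eqP => A0; move: AK; rewrite A0 /= K0.
apply/forall_inP => i iA; apply/negPn/negP => B.
have := Amin _ B (subD1set A i) => /setP /(_ i).
by rewrite !inE eqxx iA.
Qed.

Theorem proposition2p3 (m : nat) (K : {set {set 'I_m}}) :
  simplicial_complex K -> minimal_Taylor_resolution K ->
  exists (W : finType) (r : nat) (N : 'I_r -> {set W}), sc_iso K (K_of N).
Proof.
move=> SC MT.
set MF := min_nonfaces K.
set r := #|MF|.
pose M (i : 'I_r) : {set 'I_m} := enum_val i.
have MMF i : M i \in MF by exact: enum_valP.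
have Minj : injective M by exact: enum_val_inj.
have priv : forall i, exists x, (x \in M i) && [forall j, (j != i) ==> (x \notin M j)].
  move=> i; have := MT MF (subxx _) (M i) (MMF i).
  case/subsetPn => x xM xU; exists x; rewrite xM /=.
  apply/forallP => j; apply/implyP => ji; apply/negP => xj; apply: (negP xU).
  apply/bigcupP; exists (M j) => //.
  rewrite !inE (inj_eq Minj) ji /=; by have := MMF j; rewrite inE.
have [a Ha] := fin_all_exists priv.
have aM i : a i \in M i by case/andP: (Ha i).
have aN i j : j != i -> a i \notin M j.
  by move=> ji; case/andP: (Ha i) => _ /forallP /(_ j) /implyP; apply.
have ainj : injective a.
  move=> i j aij; apply/eqP; apply/negPn/negP => ij.
  by have := aN i j; rewrite eq_sym ij aij aM => /(_ isT).
set A := a @: setT.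
pose W := {x : 'I_m | x \notin A}.
pose N (i : 'I_r) : {set W} := [set w : W | val w \in M i].
pose g (u : W + 'I_r) : 'I_m := match u with inl w => val w | inr i => a i end.
have ginj : injective g.
  case=> [w|i] [w'|i'] //= E.
  - by congr inl; apply: val_inj.
  - by have := valP w; rewrite /= E imset_f.
  - by have := valP w'; rewrite /= -E imset_f.
  - by rewrite (ainj _ _ E).
have gbij : bijective g.
  apply: (@inj_card_bij (W + 'I_r)%type _ g ginj).
  rewrite card_sum card_sig card_ord.
  have -> : #|[pred x : 'I_m | x \notin A]| = #|~: A| by apply: eq_card => x; rewrite !inE.
  have cA : #|A| = r by rewrite card_imset // cardsT card_ord.
  rewrite card_ord; have := cardsC A; rewrite cA card_ord => E; by rewrite -[X in X <= _]E addnC.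
have gM i : g @: tilde_N N i = M i.
  apply/setP => x; apply/imsetP/idP.
    move=> [u /setUP [/imsetP [w wN ->] | /set1P ->] ->] /=.
      by move: wN; rewrite inE.
    exact: aM.
  move=> xM; case: (boolP (x \in A)) => xA.
    case/imsetP: xA => j _ xj; subst x.
    have ji : j = i.
      apply/eqP; apply/negPn/negP => ji.
      by move: xM; rewrite (negbTE (aN j i _)) // eq_sym.
    subst j; exists (inr i) => //.
    by rewrite /tilde_N !inE eqxx orbT.
  exists (inl (exist (fun y : 'I_m => y \notin A) x xA : W)) => //.
  rewrite /tilde_N in_setU; apply/orP; left; apply: imset_f.
  by rewrite inE.
have main (t : {set W + 'I_r}) : (g @: t \in K) = (t \in K_of N).
  rewrite (@faces_char _ K SC) /K_of inE; apply/forall_inP/forallP.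
    move=> H i; apply/negP => sub.
    by have := H (M i) (MMF i); rewrite -gM imsetS.
  move=> H M0 M0F.
  have -> : M0 = M (enum_rank_in M0F M0) by rewrite /M enum_rankK_in.
  set i := enum_rank_in M0F M0.
  apply/negP => sub; apply: (negP (H i)); apply/subsetP => u uT.
  have : g u \in g @: t by apply: (subsetP sub); rewrite -gM imset_f.
  by rewrite mem_imset.
case: gbij => f gK fK.
exists W, r, N, f; split; first by exists g.
move=> s; rewrite -main -imset_comp (eq_imset _ fK) imset_id //.
Qed.
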